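(* Let $A$ be a real $m\times n$ matrix of rank $\rho\ge1$ with columns $A_1,\ldots,A_n$, let $\mu>0$, and let $\pi:[n]\to[n]$ be a permutation such that $A_{\pi(1)},\ldots,A_{\pi(\rho)}$ are linearly independent. For $k\in\{0,\ldots,\rho\}$ let $W_k$ be the orthogonal projection onto $\mathrm{span}\{A_{\pi(1)},\ldots,A_{\pi(k)}\}$ ($W_0=0$), $W_k^\perp=I-W_k$, and define the orthonormal vectors $Q_k=W_{k-1}^\perp(A_{\pi(k)})/\|W_{k-1}^\perp(A_{\pi(k)})\|$, $k\in[\rho]$. Suppose $s\in[\rho]$ satisfies $\|W_s^\perp(A_i)\|<\mu$ for all $i\in[n]$. Let $Q_{[s]}$ be the $m\times s$ matrix with columns $Q_1,\ldots,Q_s$ and define $F_s:\mathbb R^m\to\mathbb R^s$ by $F_s(v)=(Q_{[s]})^*v$. Then $F_s$ is an $s$-dimensional $2\mu$-distortion of the set of columns of $A$, i.e. $$\sup_{i,j\in[n]}\Big|\,\|A_i-A_j\|-\|F_s(A_i)-F_s(A_j)\|\,\Big|\le 2\mu.$$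
   Context: Norms are Euclidean; $[k]=\{1,\ldots,k\}$; $^*$ denotes transpose. *)

(* Defs.v *)
From HB Require Import structures.
From mathcomp Require Import all_boot all_order all_algebra all_fingroup.
From mathcomp Require Import reals.
Set Implicit Arguments. Unset Strict Implicit. Unset Printing Implicit Defensive.
Import Order.TTheory GRing.Theory Num.Theory.
Local Open Scope ring_scope.

Definition enorm (R : realType) (m : nat) (v : 'cV[R]_m) : R :=
  Num.sqrt (\sum_(i < m) v i 0 ^+ 2).

(* Row space (as a matrix whose rows are the transposed vectors) spanned by
   A_{pi(1)}, ..., A_{pi(k)}; with 0-based indices these are the columns
   pi i for i < k. *)
Definition span_first (R : realType) (m n : nat) (A : 'M[R]_(m, n))
    (pi : 'S_n) (k : nat) : 'M[R]_(n, m) :=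
  \matrix_(i < n) (if (i < k)%N then (col (pi i) A)^T else 0).

Definition is_orth_proj (R : realType) (m p : nat) (P : 'M[R]_m)
    (U : 'M[R]_(p, m)) : Prop :=
  forall v : 'cV[R]_m,
    ((P *m v)^T <= U)%MS /\
    (forall u : 'cV[R]_m, (u^T <= U)%MS -> u^T *m (v - P *m v) = 0).

(* Q_{j+1} = W_j^perp(A_{pi(j+1)}) / ||W_j^perp(A_{pi(j+1)})||  (0-based j). *)
Definition Qvec (R : realType) (m n : nat) (A : 'M[R]_(m, n)) (pi : 'S_n)
    (W : nat -> 'M[R]_m) (j : 'I_n) : 'cV[R]_m :=
  let v := (1%:M - W j) *m col (pi j) A in (enorm v)^-1 *: v.

Definition Qmat (R : realType) (m n : nat) (A : 'M[R]_(m, n)) (pi : 'S_n)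
    (W : nat -> 'M[R]_m) (s : nat) (Hsn : (s <= n)%N) : 'M[R]_(m, s) :=
  \matrix_(r < m, j < s) Qvec A pi W (widen_ord Hsn j) r 0.

(* Main.v *)
Require Import Defs.
From HB Require Import structures.
From mathcomp Require Import all_boot all_order all_algebra all_fingroup.
From mathcomp Require Import reals.
From mathcomp Require Import lra.
Import Order.TTheory GRing.Theory Num.Theory.
Set Implicit Arguments. Unset Strict Implicit. Unset Printing Implicit Defensive.
Local Open Scope ring_scope.

Definition N2 (R : realType) (m : nat) (v : 'cV[R]_m) : R := (v^T *m v) 0 0.

Lemma N2E (R : realType) (m : nat) (v : 'cV[R]_m) : N2 v = \sum_(i < m) v i 0 ^+ 2.
Proof. by rewrite /N2 !mxE; apply: eq_bigr => i _; rewrite !mxE expr2. Qed.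

Lemma enormE (R : realType) (m : nat) (v : 'cV[R]_m) : enorm v = Num.sqrt (N2 v).
Proof. by rewrite N2E. Qed.

Lemma N2_ge0 (R : realType) (m : nat) (v : 'cV[R]_m) : 0 <= N2 v.
Proof. rewrite N2E; apply: sumr_ge0 => i _; exact: sqr_ge0. Qed.

Lemma N2_eq0 (R : realType) (m : nat) (v : 'cV[R]_m) : N2 v = 0 -> v = 0.
Proof.
rewrite N2E => /eqP; rewrite psumr_eq0; last by move=> i _; exact: sqr_ge0.
move=> /allP H; apply/matrixP => i k; rewrite (ord1 k) mxE.
by have := H i (mem_index_enum _); rewrite sqrf_eq0 => /eqP.
Qed.

Lemma N2_sub (R : realType) (m : nat) (a b : 'cV[R]_m) :
  N2 (a - b) <= 2 * N2 a + 2 * N2 b.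
Proof.
rewrite !N2E !mulr_sumr -big_split /=; apply: ler_sum => i _.
rewrite !mxE; have := sqr_ge0 (a i 0 + b i 0); nra.
Qed.

Lemma sf_row (R : realType) (m n : nat) (A : 'M[R]_(m, n)) (pi : 'S_n) k i :
  row i (span_first A pi k) = if (i < k)%N then (col (pi i) A)^T else 0.
Proof. by rewrite /span_first rowK. Qed.

Lemma sf_mono (R : realType) (m n : nat) (A : 'M[R]_(m, n)) (pi : 'S_n) k l :
  (k <= l)%N -> (span_first A pi k <= span_first A pi l)%MS.
Proof.
move=> kl; apply/row_subP => i; rewrite sf_row.
case: ifP => ik; last exact: sub0mx.
have il : (i < l)%N by apply: leq_trans ik kl.
by have := row_sub i (span_first A pi l); rewrite sf_row il.
Qed.

Lemma sf_rank (R : realType) (m n : nat) (A : 'M[R]_(m, n)) (pi : 'S_n) k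
  (Hk : (k <= n)%N) : (\rank (span_first A pi k) <= k)%N.
Proof.
pose M := \matrix_(i < k) (col (pi (widen_ord Hk i)) A)^T.
apply: leq_trans (rank_leq_row M).
apply: mxrankS; apply/row_subP => i; rewrite sf_row.
case: ifP => ik; last exact: sub0mx.
have -> : (col (pi i) A)^T = row (Ordinal ik) M.
  by rewrite rowK; congr (col (pi _) A)^T; apply: val_inj.
exact: row_sub.
Qed.

Lemma v_sub (R : realType) (m n : nat) (A : 'M[R]_(m, n)) (pi : 'S_n)
  (W : nat -> 'M[R]_m) (j : 'I_n)
  (HWj : is_orth_proj (W j) (span_first A pi j)) :
  (((1%:M - W j) *m col (pi j) A)^T <= span_first A pi j.+1)%MS.
Proof.
rewrite mulmxBl mul1mx linearB /=; apply: addmx_sub.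
  by have := row_sub j (span_first A pi j.+1); rewrite sf_row ltnSn.
rewrite eqmx_opp; apply: submx_trans (sf_mono A pi (leqnSn j)).
exact: (HWj (col (pi j) A)).1.
Qed.

Lemma q_sub (R : realType) (m n : nat) (A : 'M[R]_(m, n)) (pi : 'S_n)
  (W : nat -> 'M[R]_m) (j : 'I_n)
  (HWj : is_orth_proj (W j) (span_first A pi j)) :
  ((Qvec A pi W j)^T <= span_first A pi j.+1)%MS.
Proof. rewrite /Qvec linearZ /=; apply: scalemx_sub; exact: v_sub. Qed.

Lemma q_orth (R : realType) (m n : nat) (A : 'M[R]_(m, n)) (pi : 'S_n)
  (W : nat -> 'M[R]_m) (j k : 'I_n) (jk : (j < k)%N)
  (HWj : is_orth_proj (W j) (span_first A pi j))
  (HWk : is_orth_proj (W k) (span_first A pi k)) :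
  (Qvec A pi W j)^T *m Qvec A pi W k = 0.
Proof.
rewrite {2}/Qvec -scalemxAr mulmxBl mul1mx.
have := (HWk (col (pi k) A)).2 (Qvec A pi W j).
rewrite (submx_trans (q_sub HWj) (sf_mono A pi jk)) => /(_ isT) ->.
by rewrite scaler0.
Qed.

Lemma q_norm (R : realType) (m n : nat) (A : 'M[R]_(m, n)) (pi : 'S_n)
  (W : nat -> 'M[R]_m) (j : 'I_n)
  (Hv : (1%:M - W j) *m col (pi j) A != 0) :
  (Qvec A pi W j)^T *m Qvec A pi W j = 1%:M.
Proof.
rewrite /Qvec; set v := (1%:M - W j) *m col (pi j) A.
rewrite linearZ /= linearZ /= -scalemxAl scalerA.
have hN : 0 < N2 v.
  rewrite lt0r N2_ge0 andbT; apply/eqP => /N2_eq0 h; by move: Hv; rewrite -/v h eqxx.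
apply/matrixP => a b; rewrite !ord1 !mxE /= -/(N2 v) enormE.
rewrite -expr2 exprVn sqr_sqrtr ?N2_ge0 //=.
have -> : \sum_(j0 < m) v^T 0 j0 * v j0 0 = N2 v by rewrite /N2 mxE.
by rewrite mulVf // gt_eqF.
Qed.

Lemma v_neq0 (R : realType) (m n : nat) (A : 'M[R]_(m, n)) (pi : 'S_n)
  (W : nat -> 'M[R]_m) (r : nat) (Hr : (r <= n)%N)
  (Hind : row_free (\matrix_(i < r) (col (pi (widen_ord Hr i)) A)^T))
  (j : 'I_n) (jr : (j < r)%N)
  (HWj : is_orth_proj (W j) (span_first A pi j)) :
  (1%:M - W j) *m col (pi j) A != 0.
Proof.
apply/eqP; rewrite mulmxBl mul1mx => /eqP; rewrite subr_eq0 => /eqP h.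
have ha : ((col (pi j) A)^T <= span_first A pi j)%MS.
  by rewrite {1}h; exact: (HWj (col (pi j) A)).1.
case/submxP: ha => D hD.
set M := \matrix_(i < r) _ in Hind.
pose j' := Ordinal jr.
pose y1 : 'rV_r := \row_(i < r) (if (i < j)%N then D 0 (widen_ord Hr i) else 0).
have e : widen_ord Hr j' = j by apply: val_inj.
have hy : (y1 - delta_mx 0 j') *m M = 0 *m M.
  rewrite mul0mx mulmxBl -rowE rowK e.
  suff -> : y1 *m M = (col (pi j) A)^T by rewrite subrr.
  rewrite hD !mulmx_sum_row.
  rewrite [RHS](bigID (fun i : 'I_n => (i < r)%N)) /=.
  rewrite [X in _ = _ + X]big1 ?addr0; last first.
    move=> i /negbTE ir; rewrite sf_row.
    case: ifP => ij; last by rewrite scaler0.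
    by have := leq_trans ij (ltnW jr); rewrite ir.
  rewrite big_ord_narrow; apply: eq_bigr => i _.
  by rewrite rowK sf_row mxE /=; case: ifP => _; rewrite ?scaler0 ?scale0r.
have := row_free_inj Hind hy; move/matrixP => /(_ 0 j').
rewrite !mxE /= ltnn eqxx /= => /eqP; rewrite sub0r oppr_eq0 => /eqP.
by move/eqP; rewrite oner_eq0.
Qed.

Lemma final_ineq (R : realType) (P Rr mu : R) :
  0 <= P -> 0 <= Rr -> Rr < 4 * mu ^+ 2 -> 0 < mu ->
  `| Num.sqrt (P + Rr) - Num.sqrt P | <= 2 * mu.
Proof.
move=> P0 R0 Rlt mu0.
have hX := sqr_sqrtr (addr_ge0 P0 R0). have hP := sqr_sqrtr P0.
have gX := sqrtr_ge0 (P + Rr). have gP := sqrtr_ge0 P.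
set sX := Num.sqrt (P + Rr) in hX gX *; set sP := Num.sqrt P in hP gP *.
have le : sP <= sX by nra.
rewrite ger0_norm ?subr_ge0 //.
have h1 : (sX - sP) ^+ 2 <= Rr by nra.
nra.
Qed.

Theorem proposition1 (R : realType) (m n : nat) (A : 'M[R]_(m, n)) (mu : R)
  (pi : 'S_n)
  (Hrho : (0 < \rank A)%N)
  (Hmu : 0 < mu)
  (Hind : row_free (\matrix_(i < \rank A)
                      (col (pi (widen_ord (rank_leq_col A) i)) A)^T))
  (W : nat -> 'M[R]_m)
  (HW : forall k : nat, (k <= \rank A)%N -> is_orth_proj (W k) (span_first A pi k))
  (s : nat) (Hs1 : (0 < s)%N) (Hs : (s <= \rank A)%N)
  (Hsmall : forall i : 'I_n, enorm ((1%:M - W s) *m col i A) < mu) :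
  let Q := Qmat A pi W (leq_trans Hs (rank_leq_col A)) in
  let F := fun v : 'cV[R]_m => Q^T *m v in
  forall i j : 'I_n,
    `| enorm (col i A - col j A) - enorm (F (col i A) - F (col j A)) | <= 2 * mu.
Proof.
move=> Q F i j.
set Hsn := leq_trans Hs (rank_leq_col A).
have HWk : forall k : nat, (k <= s)%N -> is_orth_proj (W k) (span_first A pi k).
  by move=> k ks; apply: HW; apply: leq_trans ks Hs.
pose qv (k : 'I_s) := Qvec A pi W (widen_ord Hsn k).
have colQ : forall k, col k Q = qv k.
  by move=> k; apply/matrixP => a b; rewrite /Q /Qmat !mxE (ord1 b).
have rowQT : forall k, row k Q^T = (qv k)^T by move=> k; rewrite -tr_col colQ.
have HQQ : Q^T *m Q = 1%:M.
  apply/matrixP => a b.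
  transitivity (((qv a)^T *m qv b) 0 0).
    by rewrite !mxE; apply: eq_bigr => k _; rewrite !mxE.
  rewrite [RHS]mxE.
  case: (ltngtP a b) => hab.
  - rewrite q_orth ?mxE //; first by rewrite -val_eqE /= (ltn_eqF hab).
      by apply: HWk; apply: ltnW; apply: (ltn_ord a).
    by apply: HWk; apply: ltnW; apply: (ltn_ord b).
  - rewrite -[(qv a)^T *m qv b]trmxK trmx_mul trmxK.
    rewrite q_orth ?mxE //; first by rewrite eq_sym -val_eqE /= (ltn_eqF hab).
      by apply: HWk; apply: ltnW; apply: (ltn_ord b).
    by apply: HWk; apply: ltnW; apply: (ltn_ord a).
  - have eab : a = b by apply: val_inj.
    subst b; rewrite q_norm ?mxE ?eqxx //.
    apply: (@v_neq0 _ _ _ A pi W _ _ Hind (widen_ord Hsn a)).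
      by apply: leq_trans (ltn_ord a) Hs.
    by apply: HWk; exact: ltnW (ltn_ord a).
have HQs : (Q^T <= span_first A pi s)%MS.
  apply/row_subP => k; rewrite rowQT.
  apply: (submx_trans _ (sf_mono A pi (ltn_ord k))).
  apply: q_sub.
  by apply: HWk; exact: ltnW (ltn_ord k).
have Hrank : \rank Q^T = s.
  by apply/eqP; apply/row_freeP; exists Q.
have Hspan : (span_first A pi s <= Q^T)%MS.
  have H := mxrank_leqif_sup HQs.
  rewrite -H.2 eqn_leq H.1 Hrank sf_rank //.
set x := col i A - col j A.
set p := W s *m x.
set rr := x - p.
have Hp : (p^T <= span_first A pi s)%MS := (HW s Hs x).1.
have Hperp : forall u : 'cV[R]_m, (u^T <= span_first A pi s)%MS -> u^T *m rr = 0
  := (HW s Hs x).2.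
have HQp : Q *m (Q^T *m p) = p.
  case/submxP: (submx_trans Hp Hspan) => D hD.
  have -> : p = Q *m D^T by rewrite -[p]trmxK hD trmx_mul trmxK.
  by rewrite (mulmxA Q^T) HQQ mul1mx.
have HQr : Q^T *m rr = 0.
  apply/row_matrixP => k; rewrite row_mul rowQT row0.
  apply: Hperp; rewrite -rowQT; exact: submx_trans (row_sub _ _) HQs.
have ex : x = p + rr by rewrite /rr addrCA subrr addr0.
have Er : rr = (1%:M - W s) *m col i A - (1%:M - W s) *m col j A.
  by rewrite -mulmxBr mulmxBl mul1mx.
clearbody rr.
have Fx : F (col i A) - F (col j A) = Q^T *m p.
  by rewrite /F -mulmxBr -/x {1}ex mulmxDr HQr addr0.
have NQp : N2 (Q^T *m p) = N2 p.
  by rewrite /N2 trmx_mul trmxK -(mulmxA p^T) HQp.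
have Nx : N2 x = N2 p + N2 rr.
  have E : x^T *m x = p^T *m p + rr^T *m rr.
    rewrite {1 2}ex.
    have -> : (p + rr)^T = p^T + rr^T by apply/matrixP => a b; rewrite !mxE.
    rewrite mulmxDl !mulmxDr Hperp //.
    have -> : rr^T *m p = (p^T *m rr)^T by rewrite trmx_mul trmxK.
    by rewrite Hperp // trmx0 addr0 add0r.
  by rewrite /N2 E mxE.
have Nr : N2 rr < 4 * mu ^+ 2.
  have bnd : forall k : 'I_n, N2 ((1%:M - W s) *m col k A) < mu ^+ 2.
    move=> k; have := Hsmall k; rewrite enormE.
    set t := N2 _ => ht.
    have := sqr_sqrtr (N2_ge0 ((1%:M - W s) *m col k A)); rewrite -/t => e.
    have := sqrtr_ge0 t; nra.
  have := N2_sub ((1%:M - W s) *m col i A) ((1%:M - W s) *m col j A).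
  rewrite -Er; have := bnd i; have := bnd j; lra.
rewrite Fx !enormE NQp Nx; apply: final_ineq => //; exact: N2_ge0.
Qed.
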